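(* 1. If $\alpha,\beta\in\mathrm{ord}$ satisfy $I_\alpha=I_\beta$ and $\alpha_i\le\beta_i$ for all $i\in I_\alpha$, then $\alpha\le\beta$. 2. If $\alpha,\beta\in\mathrm{ord}^*$ satisfy $I_\alpha=I_\beta$ and $\alpha_i\le\beta_i$ for all $i\in I_\alpha$, then $\sup(\alpha_i)_{i\in I_\alpha}\le\sup(\beta_i)_{i\in I_\beta}$ (when these sups are defined, i.e. the $\alpha_i,\beta_i$ lie in $\mathrm{ord}^*$); the same holds for sups of finite families in $\mathrm{ord}$. 3. For all $\alpha\in\mathrm{ord}$, $\alpha\le\alpha$; a fortiori $\alpha\le\alpha,\beta^1,\dots,\beta^m$ for any $\beta^1,\dots,\beta^m\in\mathrm{ord}$. 4. For all $\alpha\in\mathrm{ord}^*$ and $i\in I_\alpha$, $\alpha_i<\alpha$; a fortiori $\alpha_i<\alpha,\beta^1,\dots,\beta^m$. 5. For all $\alpha\in\mathrm{ord}$, $\alpha<\alpha$ is impossible. 6. For all $\alpha\in\mathrm{ord}$, $\alpha<\mathrm{succ}(\alpha)$. 7. For $\alpha,\beta\in\mathrm{ord}$: if $\gamma<\beta$ for all $\gamma\in\mathrm{ord}$ with $\gamma<\alpha$, then $\alpha\le\beta$.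
   Context: Work constructively (intuitionistic logic). Let $\mathfrak F$ be a set of index sets such that: $\mathbb N$ and each $\mathbb N_k=\{n\in\mathbb N:n<k\}$ ($k\ge 0$) belong to $\mathfrak F$; every finitely enumerated subset of an element of $\mathfrak F$ is isomorphic to an element of $\mathfrak F$; for $J\in\mathfrak F$ the set of finitely enumerated subsets of $J$ is isomorphic to an element of $\mathfrak F$; $\mathfrak F$ is stable under disjoint unions indexed by elements of $\mathfrak F$. A finitely enumerated subset of $A$ is one given by a map $\mathbb N_k\to A$; write $F\subseteq_f I$. The set $\mathrm{ord}$ of (names of) ordinals is inductively generated by a distinguished element $\underline 0$ and, for every family $(\alpha_i)_{i\in I}$ with $I\in\mathfrak F$ and $\alpha_i\in\mathrm{ord}$, an element $\mathrm S(\alpha_i)_{i\in I}$. Elements of the second kind form $\mathrm{ord}^*$; for $\alpha=\mathrm S(\alpha_i)_{i\in I}$ put $I_\alpha=I$ and call the $\alpha_i$ its definitional subordinals; by convention $I_{\underline 0}=\emptyset$. For a finite list $F$ in $I_\alpha$, $\alpha_F$ is the list of the $\alpha_i$, $i\in F$. $\mathrm{succ}(\alpha)$ denotes $\mathrm S$ of the one-element family $(\alpha)$ indexed by $\{0\}$. Supremum: for a family $(\alpha^j)_{j\in J}$ in $\mathrm{ord}^*$ with $J\in\mathfrak F$, $\sup(\alpha^j)_{j\in J}=\mathrm S(\varepsilon_k)_{k\in K}$ where $K$ is the disjoint union of the $I_{\alpha^j}$ (injections $\iota_j$) and $\varepsilon_{\iota_j(i)}=(\alpha^j)_i$. For a finite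 family in $\mathrm{ord}$, $\sup(\alpha^1,\dots,\alpha^r)$ is $\underline 0$ if all are $\underline 0$, else the sup of those in $\mathrm{ord}^*$. Relations between an element and a nonempty finite list, by simultaneous induction: $\alpha\le\beta^1,\dots,\beta^m$ means $\alpha_i<\beta^1,\dots,\beta^m$ for all $i\in I_\alpha$; $\alpha<\beta^1,\dots,\beta^m$ means there exist $F_1\subseteq_f I_{\beta^1},\dots,F_m\subseteq_f I_{\beta^m}$, not all empty, with $\alpha\le\beta^1_{F_1},\dots,\beta^m_{F_m}$ (concatenated list). *)

(* Defs.v *)
From mathcomp Require Import all_boot.

Set Implicit Arguments.
Unset Strict Implicit.
Unset Printing Implicit Defensive.

Definition iso (A B : Type) : Prop :=
  exists (f : A -> B) (g : B -> A), cancel f g /\ cancel g f.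

Record Frak := {
  inF : Type -> Prop;
  inF_nat : inF nat;
  inF_Nk : forall k : nat, inF 'I_k;
  inF_fin : forall I : Type, inF I -> forall (k : nat) (e : 'I_k -> I),
      exists J : Type, inF J /\ iso J {i : I | exists j, e j = i};
  (* the set of finitely enumerated subsets of J (given by enumerations
     ℕ_k -> J, i.e. finite lists) is isomorphic to an element of 𝔉 *)
  inF_fsubsets : forall J : Type, inF J ->
      exists K : Type, inF K /\ iso K (seq J);
  inF_sigma : forall J : Type, inF J -> forall A : J -> Type,
      (forall j, inF (A j)) -> inF {j : J & A j}
}.

(* Names of ordinals: generated by 0 and S(α_i)_{i ∈ I}, I ∈ 𝔉. *)
Inductive ord (fr : Frak) : Type :=
| Zero : ord fr
| Sup (I : Type) (HI : inF fr I) (f : I -> ord fr) : ord fr.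
Arguments Zero {fr}.
Arguments Sup {fr} I HI f.

Section OrdDefs.
Variable fr : Frak.
Local Notation ord := (ord fr).

Definition is_star (a : ord) : Prop :=
  match a with Zero => False | Sup _ _ _ => True end.
Definition is_starb (a : ord) : bool :=
  match a with Zero => false | Sup _ _ _ => true end.

(* I_α ; by convention I_0 = ∅ (taken to be ℕ_0 = 'I_0) *)
Definition I_ord (a : ord) : Type :=
  match a with Zero => 'I_0 | Sup J _ _ => J end.

Definition I_in_F (a : ord) : inF fr (I_ord a) :=
  match a return inF fr (I_ord a) with
  | Zero => inF_Nk fr 0
  | Sup _ HI _ => HI
  end.

(* definitional subordinals α_i (the Zero case has an empty domain) *)
Definition sub (a : ord) : I_ord a -> ord :=
  match a return I_ord a -> ord with
  | Zero => fun _ => Zero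
  | Sup _ _ f => f
  end.
Arguments sub : clear implicits.

(* A choice of finite lists F_1 ⊆_f I_{β^1}, ..., F_m ⊆_f I_{β^m} *)
Fixpoint sels (L : seq ord) : Type :=
  match L with
  | [::] => unit
  | b :: L' => (seq (I_ord b) * sels L')%type
  end.

Fixpoint picked (L : seq ord) : sels L -> seq ord :=
  match L return sels L -> seq ord with
  | [::] => fun _ => [::]
  | b :: L' => fun s => map (sub b) s.1 ++ @picked L' s.2
  end.
Arguments picked : clear implicits.

Fixpoint all_empty (L : seq ord) : sels L -> bool :=
  match L return sels L -> bool with
  | [::] => fun _ => true
  | b :: L' => fun s => nilp s.1 && @all_empty L' s.2
  end.
Arguments all_empty : clear implicits.

(* α ≤ β^1,...,β^m : for all i ∈ I_α, α_i < β^1,...,β^m, where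
   γ < β^1..β^m : there are F_j ⊆_f I_{β^j}, not all empty, with
   γ ≤ β^1_{F_1},...,β^m_{F_m}.  (Simultaneous induction on α.) *)
Fixpoint ord_le (a : ord) (L : seq ord) {struct a} : Prop :=
  match a with
  | Zero => True
  | Sup _ _ f => forall i,
      exists s : sels L, ~~ all_empty L s /\ ord_le (f i) (picked L s)
  end.

Definition ord_lt (a : ord) (L : seq ord) : Prop :=
  exists s : sels L, ~~ all_empty L s /\ ord_le a (picked L s).

Definition succ (a : ord) : ord := Sup 'I_1 (inF_Nk fr 1) (fun _ => a).

(* sup of a family (α^j)_{j ∈ J} (intended for α^j ∈ ord^* ):
   S(ε_k)_{k ∈ K}, K = disjoint union of the I_{α^j}. *)
Definition sup (J : Type) (HJ : inF fr J) (a : J -> ord) : ord :=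
  Sup {j : J & I_ord (a j)}
      (inF_sigma HJ (fun j => I_in_F (a j)))
      (fun k => sub (a (projT1 k)) (projT2 k)).

Definition fsup (l : seq ord) : ord :=
  let l' := filter is_starb l in
  if nilp l' then Zero
  else sup (inF_Nk fr (size l')) (fun j : 'I_(size l') => nth Zero l' j).

Definition cast_idx (A B : Type) (e : A = B) (i : A) : B :=
  eq_rect A (fun T => T) i B e.

End OrdDefs.
Arguments sub {fr} a i.
Arguments picked {fr} L s.
Arguments all_empty {fr} L s.

(* Main.v *)
Require Import Defs.
From mathcomp Require Import all_boot.
From Corelib Require Import Setoid.
Set Implicit Arguments.
Unset Strict Implicit.

Fixpoint inL {T} (y : T) (L : seq T) : Prop :=
  match L with [::] => False | x :: L' => x = y \/ inL y L' end.

Lemma inL_cat T (y : T) l1 l2 : inL y (l1 ++ l2) <-> inL y l1 \/ inL y l2.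
Proof. elim: l1 => [|x l IH] /=; first by intuition. have := IH; tauto. Qed.

Lemma inL_map T U (f : T -> U) y l : inL y (map f l) -> exists x, inL x l /\ y = f x.
Proof. elim: l => [|x l IH] //= [<-|/IH [z [H ->]]]; [exists x|exists z]; tauto. Qed.

Lemma inL_mapI T U (f : T -> U) x l : inL x l -> inL (f x) (map f l).
Proof. elim: l => [|z l IH] //= [->|/IH]; tauto. Qed.

Section S.
Variable fr : Frak.
Local Notation ord := (ord fr).

Fixpoint esel (L : seq ord) : sels L :=
  match L with [::] => tt | b :: L' => ([::], esel L') end.

Lemma picked_esel (L : seq ord) : picked L (esel L) = [::].
Proof. by elim: L => //= b L ->. Qed.

Lemma all_empty_esel (L : seq ord) : all_empty L (esel L).
Proof. by elim: L. Qed.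

Fixpoint selcat (L : seq ord) : sels L -> sels L -> sels L :=
  match L return sels L -> sels L -> sels L with
  | [::] => fun _ _ => tt
  | b :: L' => fun s t => (s.1 ++ t.1, @selcat L' s.2 t.2)
  end.

Lemma all_empty_cat (L : seq ord) (s t : sels L) :
  all_empty L (selcat s t) = all_empty L s && all_empty L t.
Proof.
elim: L s t => //= b L IH [s1 s2] [t1 t2] /=; rewrite IH.
by case: s1; case: t1 => //=; case: (all_empty L s2).
Qed.

Lemma picked_cat (L : seq ord) (s t : sels L) y :
  inL y (picked L s) \/ inL y (picked L t) -> inL y (picked L (selcat s t)).
Proof.
elim: L s t => //= [_ _ [] //|b L IH [s1 s2] [t1 t2] /=].
rewrite !inL_cat map_cat inL_cat => H.
have := IH s2 t2; tauto.
Qed.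

Lemma picked_in (L : seq ord) (s : sels L) y : inL y (picked L s) ->
  exists (b : ord) (k : I_ord b), inL b L /\ y = sub b k.
Proof.
elim: L s => //= b L IH [s1 s2] /= H; have [H'|H'] := proj1 (inL_cat _ _ _) H.
  have [k [_ ->]] := inL_map H'.
  by exists b, k; tauto.
by have [c [k [H2 ->]]] := IH _ H'; exists c, k; tauto.
Qed.

Lemma picked_ne (L : seq ord) (s : sels L) : ~~ all_empty L s -> picked L s <> [::].
Proof.
by elim: L s => //= b L IH [[|k s1] s2] //= H; exact: IH.
Qed.

Lemma add_sel (L : seq ord) (s : sels L) x (k : I_ord x) : inL x L ->
  exists s', ~~ all_empty L s' /\ (forall y, inL y (picked L s) -> inL y (picked L s'))
     /\ inL (sub x k) (picked L s').
Proof.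
elim: L s => //= b L IH [s1 s2] [E|H].
  subst b; exists (k :: s1, s2) => /=; split => //; split; last by left.
  by move=> y; rewrite !inL_cat /=; tauto.
have [s' [ne [inc ink]]] := IH s2 H.
exists (s1, s') => /=; split; first by rewrite negb_and ne orbT.
split; last by rewrite inL_cat; right.
by move=> y; rewrite !inL_cat; have := inc y; tauto.
Qed.

Lemma cover (L : seq ord) L' (H : forall y, inL y L -> inL y L') (s : sels L) :
  exists t : sels L', (~~ all_empty L s -> ~~ all_empty L' t) /\
    forall y, inL y (picked L s) -> inL y (picked L' t).
Proof.
elim: L H s => [|b L IH] H s.
  by exists (esel L'); split => //; rewrite picked_esel.
case: s => ks s0.
have [t0 [ne0 in0]] : exists t0 : sels L', (~~ all_empty L s0 -> ~~ all_empty L' t0) /\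
    forall y, inL y (picked L s0) -> inL y (picked L' t0).
  by apply: IH => y Hy; apply: H; right.
have Hb : inL b L' by apply: H; left.
elim: ks => [|k ks [t [ne1 in1]]] /=.
  by exists t0.
have [t' [ne' [inc ink]]] := add_sel t k Hb.
exists t'; split => // y [<-|Hy] //.
by apply: inc; apply: in1.
Qed.

Lemma mono (x : ord) (L L' : seq ord) : ord_le x L -> (forall y, inL y L -> inL y L') -> ord_le x L'.
Proof.
elim: x L L' => [|I HI f IH] L L' //= Hle Hs i.
have [s [ne le]] := Hle i.
have [t [ne' inc]] := cover Hs s.
by exists t; split; [apply: ne'|apply: IH le inc].
Qed.

Lemma le_sub_lt (x : ord) (M : seq ord) : ord_le x M -> forall k : I_ord x, ord_lt (sub x k) M.
Proof. by case: x => [|I HI f] /= H k; [case: k|exact: H]. Qed.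

Lemma le_intro (a : ord) (L : seq ord) : (forall i : I_ord a, ord_lt (sub a i) L) -> ord_le a L.
Proof. by case: a. Qed.

Lemma gather (M Y : seq ord) : (forall y, inL y Y -> ord_lt y M) ->
  exists t : sels M, (Y <> [::] -> ~~ all_empty M t) /\
     forall y, inL y Y -> ord_le y (picked M t).
Proof.
elim: Y => [|y Y IH] H.
  by exists (esel M).
have [t1 [ne1 le1]] := H y (or_introl erefl).
have [t2 [_ le2]] : exists t : sels M, (Y <> [::] -> ~~ all_empty M t) /\
     forall y, inL y Y -> ord_le y (picked M t).
  by apply: IH => z Hz; apply: H; right.
exists (selcat t1 t2); split.
  by rewrite all_empty_cat negb_and ne1.
move=> z [<-|Hz].
  by apply: mono le1 _ => w Hw; apply: picked_cat; left.
by apply: mono (le2 _ Hz) _ => w Hw; apply: picked_cat; right.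
Qed.


Definition child (y x : ord) := exists k : I_ord x, y = sub x k.
Definition R (L' L : seq ord) : Prop :=
  L' <> [::] /\ forall y, inL y L' -> exists x, inL x L /\ child y x.

Lemma acc_nil : Acc R [::].
Proof. constructor => -[|y L'] [ne H]. by []. 
have [x [Hx _]] := H y (or_introl erefl). by []. Qed.

Lemma acc_of (L Z : seq ord) : Acc R L ->
  (forall y, inL y Z -> exists x, inL x L /\ child y x) -> Acc R Z.
Proof.
case: Z => [|z Z] A H; first exact: acc_nil.
by apply: (Acc_inv A); split.
Qed.

Lemma split_list (L1 L2 Z : seq ord) :
  (forall y, inL y Z -> exists x, (inL x L1 \/ inL x L2) /\ child y x) ->
  exists Z1 Z2 : seq ord, (forall y, inL y Z -> inL y Z1 \/ inL y Z2) /\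
     (forall y, inL y Z1 -> exists x, inL x L1 /\ child y x) /\
     (forall y, inL y Z2 -> exists x, inL x L2 /\ child y x).
Proof.
elim: Z => [|z Z IH] H; first by exists [::], [::].
have [Z1 [Z2 [H0 [H1 H2]]]] : exists Z1 Z2 : seq ord, (forall y, inL y Z -> inL y Z1 \/ inL y Z2) /\
     (forall y, inL y Z1 -> exists x, inL x L1 /\ child y x) /\
     (forall y, inL y Z2 -> exists x, inL x L2 /\ child y x).
  by apply: IH => y Hy; apply: H; right.
have [x [[Hx|Hx] Hc]] := H z (or_introl erefl).
  exists (z :: Z1), Z2; split; first by move=> y /= [<-|/H0]; tauto.
  split => // y /= [<-|/H1] //; by exists x.
exists Z1, (z :: Z2); split; first by move=> y /= [<-|/H0]; tauto.
split => // y /= [<-|/H2] //; by exists x.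
Qed.

Lemma acc_union (L1 : seq ord) : Acc R L1 -> forall L2, Acc R L2 ->
  forall Z, (forall z, inL z Z -> inL z L1 \/ inL z L2) -> Acc R Z.
Proof.
elim=> {}L1 A1 IH1 L2 A2; elim: A2 => {}L2 A2 IH2 Z HZ.
constructor => Z' [ne HZ'].
have [Z1 [Z2 [H0 [H1 H2]]]] := @split_list L1 L2 Z'
  (fun y Hy => let: ex_intro x (conj Hx Hc) := HZ' y Hy in ex_intro _ x (conj (HZ x Hx) Hc)).
case: Z1 H0 H1 => [|z1 Z1] H0 H1.
  have ne2 : Z2 <> [::].
    by case: Z' ne HZ' H0 => // y Z' _ _ /(_ y (or_introl erefl)); case: (Z2) => //; tauto.
  apply: (IH2 Z2); first by split.
  by move=> z /H0 [[]|Hz]; right.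
apply: (IH1 (z1 :: Z1)); first by split.
  by apply: acc_of (Acc_intro _ A2) H2.
exact: H0.
Qed.

Lemma acc_single (a : ord) : Acc R [:: a].
Proof.
elim: a => [|I HI f IH].
  constructor => -[|y L'] [ne H]; first by case: ne.
  by have [x [[<-|[]] [k _]]] := H y (or_introl erefl); case: k.
constructor => Z [_ H]; elim: Z H => [|y Z IHZ] H; first exact: acc_nil.
apply: (@acc_union [:: y] _ Z).
- by have [x [[<-|[]] [k ->]]] := H y (or_introl erefl); exact: IH.
- by apply: IHZ => z Hz; apply: H; right.
- by move=> z /= [<-|]; tauto.
Qed.

Lemma acc_all (L : seq ord) : Acc R L.
Proof.
elim: L => [|a L IH]; first exact: acc_nil.
apply: (@acc_union [:: a] (acc_single a) L IH) => z /= [<-|]; tauto.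
Qed.

Lemma no_selfstrict (L : seq ord) : L <> [::] -> ~ (forall x, inL x L -> ord_lt x L).
Proof.
elim: (acc_all L) => {}L _ IH ne H.
have [t [ne' le]] := gather H.
have ne2 := picked_ne (ne' ne).
apply: (IH (picked L t)) => //.
  split => // y /picked_in [b [k [Hb ->]]]; exists b; split => //; by exists k.
move=> y /picked_in [b [k [Hb ->]]]; exact: le_sub_lt (le _ Hb) k.
Qed.

Lemma le_refl (a : ord) : ord_le a [:: a].
Proof.
elim: a => [|I HI f IH] //= i; exists ([:: i], tt); split => //=; exact: IH.
Qed.

Lemma le_refl2 (a : ord) bs : ord_le a (a :: bs).
Proof.
case: a => [|I HI f] //= i; exists ([:: i], esel bs); split => //=.
rewrite picked_esel; exact: le_refl.
Qed.

Lemma lt_into (z y Y : ord) : ord_lt z [:: y] ->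
  (forall m : I_ord y, exists w : I_ord Y, sub Y w = sub y m) -> ord_lt z [:: Y].
Proof.
case=> -[s0 []] /= [ne le] H.
have [ws [E1 E2]] : exists ws, map (sub Y) ws = map (sub y) s0 /\ size ws = size s0.
  elim: s0 {ne le} => [|m s0 [ws [E1 E2]]]; first by exists [::].
  have [w Hw] := H m; exists (w :: ws) => /=; by rewrite E1 E2 Hw.
exists (ws, tt) => /=; split; first by rewrite /nilp E2.
by rewrite E1.
Qed.

Lemma lt_star (z y : ord) : ord_lt z [:: y] -> is_starb y.
Proof. case: y => [|I HI f] // [[[|k s0] []] [ne _]] //; move: ne; by case: k. Qed.

Lemma nth_filter_src (P : pred ord) (l : seq ord) j : j < size (filter P l) ->
  exists p, p < size l /\ nth Zero (filter P l) j = nth Zero l p.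
Proof.
elim: l j => [|x l IH] j //=; case: (P x) => /=.
  case: j => [|j] /=; first by exists 0.
  by move=> /IH [p [Hp E]]; exists p.+1.
by move=> /IH [p [Hp E]]; exists p.+1.
Qed.

Lemma nth_filter_tgt (P : pred ord) (l : seq ord) p : p < size l -> P (nth Zero l p) ->
  exists q, q < size (filter P l) /\ nth Zero (filter P l) q = nth Zero l p.
Proof.
elim: l p => [|x l IH] [|p] //=.
  by move=> _ ->; exists 0.
move=> Hp HP; have [q [Hq E]] := IH p Hp HP.
by case: (P x); [exists q.+1|exists q].
Qed.

Lemma child_nth (L : seq ord) q (hq : q < size L) (m : I_ord (nth Zero L q)) :
  exists w : {j : 'I_(size L) & I_ord (nth Zero L j)},
    sub (nth Zero L (projT1 w)) (projT2 w) = sub (nth Zero L q) m.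
Proof. by exists (existT _ (Ordinal hq) m). Qed.

End S.

Unset Implicit Arguments.
Theorem lemma3p16 (fr : Frak) :
  (* 1 *)
  (forall (a b : ord fr) (e : I_ord a = I_ord b),
      (forall i : I_ord a, ord_le (sub a i) [:: sub b (cast_idx e i)]) ->
      ord_le a [:: b]) /\
  (* 2, families indexed by an element of 𝔉 *)
  (forall (a b : ord fr) (e : I_ord a = I_ord b),
      is_star a -> is_star b ->
      (forall i : I_ord a, is_star (sub a i)) ->
      (forall i : I_ord b, is_star (sub b i)) ->
      (forall i : I_ord a, ord_le (sub a i) [:: sub b (cast_idx e i)]) ->
      ord_le (sup (I_in_F a) (sub a)) [:: sup (I_in_F b) (sub b)]) /\
  (* 2, finite families in ord *)
  (forall l1 l2 : seq (ord fr), size l1 = size l2 ->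
      (forall i, i < size l1 -> ord_le (nth Zero l1 i) [:: nth Zero l2 i]) ->
      ord_le (fsup l1) [:: fsup l2]) /\
  (* 3 *)
  (forall a : ord fr, ord_le a [:: a] /\
      forall bs : seq (ord fr), ord_le a (a :: bs)) /\
  (* 4 *)
  (forall (a : ord fr) (i : I_ord a), is_star a ->
      ord_lt (sub a i) [:: a] /\
      forall bs : seq (ord fr), ord_lt (sub a i) (a :: bs)) /\
  (* 5 *)
  (forall a : ord fr, ~ ord_lt a [:: a]) /\
  (* 6 *)
  (forall a : ord fr, ord_lt a [:: succ a]) /\
  (* 7 *)
  (forall a b : ord fr,
      (forall g : ord fr, ord_lt g [:: a] -> ord_lt g [:: b]) ->
      ord_le a [:: b]).

Proof.
split.
  move=> a b e H; apply: le_intro => i; exists ([:: cast_idx e i], tt); split => //=; exact: H i.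
split.
  move=> a b e _ _ _ _ H; apply: le_intro => -[j k] /=.
  apply: (@lt_into fr _ (sub b (cast_idx e j))); first exact: le_sub_lt (H j) k.
  by move=> m; exists (existT _ (cast_idx e j) m).
split.
  move=> l1 l2 Hs H; rewrite {1}/fsup /=; case: ifP => H1; first by [].
  apply: le_intro => -[j k] /=.
  have [p [Hp Ex]] := nth_filter_src (ltn_ord j).
  move: k; rewrite Ex => k.
  have Hlt := le_sub_lt (H p Hp) k.
  have St := lt_star Hlt.
  have Hp2 : p < size l2 by rewrite -Hs.
  have [q [Hq Eq]] := nth_filter_tgt Hp2 St.
  rewrite /fsup /=; case: ifP => H2.
    by move: Hq; rewrite /nilp in H2; rewrite (eqP H2).
  rewrite -Eq in Hlt; apply: lt_into Hlt _ => m; exact: child_nth.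
split.
  move=> a; split; [exact: le_refl| exact: le_refl2].
split.
  move=> a i _; split; first by exists ([:: i], tt); split => //=; exact: le_refl.
  move=> bs; exists ([:: i], esel bs); split => //=; rewrite picked_esel; exact: le_refl.
split.
  move=> a [s [ne le]].
  apply: (no_selfstrict (picked_ne ne)) => x /picked_in [b [k [Hb ->]]].
  case: Hb => [Eb|[]]; subst b; exact: le_sub_lt le k.
split.
  move=> a; exists ([:: ord0], tt); split => //=; exact: le_refl.
move=> a b H; apply: le_intro => i; apply: H.
by exists ([:: i], tt); split => //=; exact: le_refl.
Qed.
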